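(* Every graph $G$ (with at least one vertex) of sd-degeneracy at most $d$ admits a clean signed tree model of width at most $d+1$.
   Context: sd-degeneracy: for distinct vertices $u,v$ let $\mathrm{sd}_G(u,v) := |(N_G(u)\setminus\{v\}) \triangle (N_G(v)\setminus\{u\})|$; $\mathrm{sdd}(G)$ is the smallest $d\ge 0$ such that $|V(G)|=1$ or there are distinct $u,v$ with $\mathrm{sd}_G(u,v)\le d$ and $\mathrm{sdd}(G-v)\le d$. Tree notation: for a rooted tree $T$, $u\prec_T u'$ means $u$ is a strict ancestor of $u'$, and $u\preceq_T u'$ means $u=u'$ or $u\prec_T u'$. For unordered pairs, $uv\preceq_T u'v'$ means ($u\preceq_T u'$ and $v\preceq_T v'$) or ($v\preceq_T u'$ and $u\preceq_T v'$); $uv\prec_T u'v'$ means $uv\preceq_T u'v'$ and $\{u,v\}\neq\{u',v'\}$. A rooted binary tree is full if every non-leaf node has exactly two children. A transversal pair of $T$ is an unordered pair of distinct nodes neither of which is an ancestor of the other. Two transversal pairs $\{u,v\},\{u',v'\}$ cross if their endpoints can be named $\{a,b\}=\{u,v\}$, $\{a',b'\}=\{u',v'\}$ so that $a\prec_T a'$ and $b'\prec_T b$. A signed tree model is a triple $(T,A(T),B(T))$ where $T$ is a full rooted binary tree, and $A(T)$ (green edges / transversal anti-edges) and $B(T)$ (blue edges / transversal edges) are disjoint sets of transversal pairs of $T$ such that no two pairs in $A(T)\cup B(T)$ cross. It defines the graph $G_{\mathcal T}$ with vertex set the set $L(T)$ of leaves of $T$, where distinct leaves $u,v$ are adjacent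 iff there is $u'v'\in B(T)$ with $u'v'\preceq_T uv$ and there is no $u''v''\in A(T)$ with $u'v'\prec_T u''v''\preceq_T uv$. A graph $G$ admits the model if $G$ is (isomorphic to) $G_{\mathcal T}$ via a bijection between $V(G)$ and $L(T)$. The width of the model is the degeneracy of the graph $(V(T),A(T)\cup B(T))$. The model is clean if every pair of sibling nodes of $T$ belongs to $A(T)\cup B(T)$. *)

(* Defs.v *)
From mathcomp Require Import all_boot.
Set Implicit Arguments. Unset Strict Implicit. Unset Printing Implicit Defensive.

(* Induced subgraphs of a simple graph (V, E) are represented by vertex sets S. *)
Definition nbhd (V : finType) (E : rel V) (S : {set V}) (x : V) : {set V} :=
  [set w in S | E x w].

Definition sd (V : finType) (E : rel V) (S : {set V}) (u v : V) : nat :=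
  let Nu := nbhd E S u :\ v in
  let Nv := nbhd E S v :\ u in
  #|(Nu :\: Nv) :|: (Nv :\: Nu)|.

(* sdd_le E d S  <->  sdd(G[S]) <= d *)
Inductive sdd_le (V : finType) (E : rel V) (d : nat) : {set V} -> Prop :=
| sdd_single (S : {set V}) : #|S| = 1 -> sdd_le E d S
| sdd_step (S : {set V}) (u v : V) : u \in S -> v \in S -> u != v -> sd E S u v <= d ->
    sdd_le E d (S :\ v) -> sdd_le E d S.

Inductive btree : Type := BLeaf | BNode of btree & btree.

(* nodes are addressed by their path from the root (false = left, true = right) *)
Fixpoint is_node (t : btree) (p : seq bool) : bool :=
  match p, t with
  | [::], _ => true
  | b :: p', BNode l r => is_node (if b then r else l) p'
  | _ :: _, BLeaf => false
  end.

Fixpoint is_leaf (t : btree) (p : seq bool) : bool :=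
  match p, t with
  | [::], BLeaf => true
  | [::], BNode _ _ => false
  | b :: p', BNode l r => is_leaf (if b then r else l) p'
  | _ :: _, BLeaf => false
  end.

Definition anc (u u' : seq bool) : bool := prefix u u'.
Definition sanc (u u' : seq bool) : bool := prefix u u' && (u != u').

Definition pair_le (u v u' v' : seq bool) : bool :=
  (anc u u' && anc v v') || (anc v u' && anc u v').
Definition same_pair (u v u' v' : seq bool) : bool :=
  ((u == u') && (v == v')) || ((u == v') && (v == u')).
Definition pair_lt (u v u' v' : seq bool) : bool :=
  pair_le u v u' v' && ~~ same_pair u v u' v'.

Definition transversal (t : btree) (u v : seq bool) : bool :=
  [&& is_node t u, is_node t v, u != v, ~~ anc u v & ~~ anc v u].

Definition cross (u v u' v' : seq bool) : Prop :=
  exists a b a' b',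
    same_pair a b u v /\ same_pair a' b' u' v' /\ sanc a a' /\ sanc b' b.

(* A set of unordered pairs of nodes is represented by a symmetric relation. *)
Definition pair_set (t : btree) (R : rel (seq bool)) : Prop :=
  (forall u v, R u v = R v u) /\ (forall u v, R u v -> transversal t u v).

Definition signed_tree_model (t : btree) (A B : rel (seq bool)) : Prop :=
  [/\ pair_set t A, pair_set t B,
      (forall u v, ~~ (A u v && B u v)) &
      (forall u v u' v', (A u v || B u v) -> (A u' v' || B u' v') ->
                         ~ cross u v u' v')].

Definition model_adj (A B : rel (seq bool)) (u v : seq bool) : Prop :=
  exists u' v', B u' v' /\ pair_le u' v' u v /\
    ~ (exists u'' v'', A u'' v'' /\ pair_lt u' v' u'' v'' /\ pair_le u'' v'' u v).

Definition degeneracy_le (t : btree) (AB : rel (seq bool)) (k : nat) : Prop :=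
  forall S : seq (seq bool), uniq S -> all (is_node t) S -> S != [::] ->
    exists2 x, x \in S & count (AB x) S <= k.

Definition clean (t : btree) (A B : rel (seq bool)) : Prop :=
  forall p, is_node t (rcons p false) ->
    A (rcons p false) (rcons p true) || B (rcons p false) (rcons p true).

Definition admits (V : finType) (E : rel V) (t : btree) (A B : rel (seq bool)) : Prop :=
  exists f : V -> seq bool,
    [/\ injective f, (forall x, is_leaf t (f x)),
        (forall p, is_leaf t p -> exists x, f x = p) &
        (forall x y, x != y -> (E x y <-> model_adj A B (f x) (f y)))].

(* Main.v *)
Require Import Defs.
From mathcomp Require Import all_boot.
Set Implicit Arguments. Unset Strict Implicit. Unset Printing Implicit Defensive.

Lemma prefix_rconsR (y p : seq bool) b :
  prefix y (rcons p b) = (y == rcons p b) || prefix y p.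
Proof.
elim: p y => [|c p IH] [|x y] //=.
- by rewrite orbF eqseq_cons; case: y.
- by rewrite IH eqseq_cons; case: (x == c).
Qed.

Lemma prefix_size (s t : seq bool) : prefix s t -> size s <= size t.
Proof. by move=> /prefixP[s' ->]; rewrite size_cat leq_addr. Qed.

Lemma prefix_antisym (s t : seq bool) : prefix s t -> prefix t s -> s = t.
Proof.
move=> /prefixP[a ->] /prefixP[b]; rewrite -catA -{1}[s]cats0 => /eqP.
rewrite eqseq_cat // => /andP[_ /eqP]; case: a => // _; by rewrite cats0.
Qed.

Lemma rcons_not_prefix (p : seq bool) b : prefix (rcons p b) p = false.
Proof. apply/negP => /prefix_size; by rewrite size_rcons ltnn. Qed.

Lemma leaf_node t p : is_leaf t p -> is_node t p.
Proof. by elim: p t => [|b p IH] [|l r] //= /IH. Qed.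

Lemma node_prefix t q p : prefix q p -> is_node t p -> is_node t q.
Proof.
elim: q p t => [|b q IH] [|c p] [|l r] //=.
by move=> /andP[/eqP -> Hp] /(IH _ _ Hp).
Qed.

Lemma leaf_no_desc t p q : is_leaf t p -> is_node t q -> prefix p q -> p = q.
Proof.
elim: p q t => [|b p IH] [|c q] [|l r] //=.
move=> Hl Hn /andP[/eqP Hbc Hp]; subst c; by rewrite (IH _ _ Hl Hn Hp).
Qed.

Lemma rcons_leaf_not_node t p b : is_leaf t p -> is_node t (rcons p b) = false.
Proof.
move=> Hl; apply/negP => Hn.
have := leaf_no_desc Hl Hn (prefix_rcons p b) => /(f_equal size).
by rewrite size_rcons => /eqP; rewrite eqn_leq ltnn andbF.
Qed.

Fixpoint graft (t : btree) (p : seq bool) : btree :=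
  match p, t with
  | [::], _ => BNode BLeaf BLeaf
  | b :: p', BNode l r => if b then BNode l (graft r p') else BNode (graft l p') r
  | _ :: _, BLeaf => BLeaf
  end.


Lemma is_node_graft t p q : is_leaf t p ->
  is_node (graft t p) q = [|| is_node t q, q == rcons p false | q == rcons p true].
Proof.
elim: p t q => [|b p IH] [|l r] //= q.
- by move=> _; case: q => [|[] [|c q]].
- move=> Hl; case: b Hl => Hl /=; case: q => [|[] q] //=; rewrite ?eqseq_cons /= ?IH ?orbF ?andbF //.
Qed.

Lemma is_leaf_graft t p q : is_leaf t p ->
  is_leaf (graft t p) q = [|| is_leaf t q && (q != p), q == rcons p false | q == rcons p true].
Proof.
elim: p t q => [|b p IH] [|l r] //= q.
- by move=> _; case: q => [|[] [|c q]].
- move=> Hl; case: b Hl => Hl /=; case: q => [|[] q] //=; rewrite ?eqseq_cons /= ?IH ?orbF ?andbF ?andbT //.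
Qed.

Lemma pair_le_symr x y a b : pair_le x y a b = pair_le x y b a.
Proof. rewrite /pair_le; by case: (anc x a); case: (anc y b); case: (anc x b); case: (anc y a). Qed.

Lemma pair_le_refl a b : pair_le a b a b.
Proof. by rewrite /pair_le /anc !prefix_refl. Qed.

Lemma pair_le_antisym x y a b : pair_le x y a b -> pair_le a b x y -> same_pair x y a b.
Proof.
rewrite /pair_le /same_pair /anc.
case/orP=> /andP[h1 h2] /orP[] /andP[h3 h4].
- by rewrite (prefix_antisym h1 h3) (prefix_antisym h2 h4) !eqxx.
- rewrite (prefix_antisym h1 (prefix_trans h4 (prefix_trans h2 h3))).
  by rewrite (prefix_antisym h2 (prefix_trans h3 (prefix_trans h1 h4))) !eqxx.
- rewrite (prefix_antisym (prefix_trans h4 (prefix_trans h1 h3)) h2).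
  by rewrite (prefix_antisym h1 (prefix_trans h3 (prefix_trans h2 h4))) !eqxx orbT.
- by rewrite (prefix_antisym h1 h4) (prefix_antisym h2 h3) !eqxx orbT.
Qed.

Lemma model_adj_sym A B a b : model_adj A B a b -> model_adj A B b a.
Proof.
move=> [x [y [Bxy [le N]]]]; exists x, y; split => //; split; first by rewrite pair_le_symr.
move=> [x' [y' [Ax [lt le']]]]; apply: N; exists x', y'; split => //; split => //.
by rewrite pair_le_symr.
Qed.

Lemma present_adj (A B : rel (seq bool)) a b :
  (forall u v, A u v = A v u) -> (forall u v, B u v = B v u) ->
  A a b || B a b -> (model_adj A B a b <-> B a b).
Proof.
move=> SA SB Hab; split.
- move=> [x [y [Bxy [le N]]]].
  case Hs: (same_pair x y a b).
  + by move: Hs; rewrite /same_pair => /orP[] /andP[/eqP<- /eqP<-] //; rewrite SB.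
  + case HA: (A a b); last by move: Hab; rewrite HA.
    exfalso; apply: N; exists a, b; split => //; split; last exact: pair_le_refl.
    by rewrite /pair_lt le Hs.
- move=> Bab; exists a, b; split => //; split; first exact: pair_le_refl.
  move=> [x [y [_ [/andP[le ns] le']]]].
  by move: ns; rewrite (pair_le_antisym le le').
Qed.

Lemma adj_transfer (A B A' B' : rel (seq bool)) a b a' b' :
  (forall x y, pair_le x y a b -> A x y || B x y ->
     [/\ pair_le x y a' b', A' x y = A x y & B' x y = B x y]) ->
  (forall x y, pair_le x y a' b' -> A' x y || B' x y ->
     [/\ pair_le x y a b, A x y = A' x y & B x y = B' x y]) ->
  model_adj A B a b -> model_adj A' B' a' b'.
Proof.
move=> H1 H2 [x [y [Bxy [le N]]]].
have [le2 _ eB] := H1 x y le (introT orP (or_intror Bxy)).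
exists x, y; split; first by rewrite eB.
split => // [[x' [y' [Ax [lt le']]]]]; apply: N.
have [le3 eA _] := H2 x' y' le' (introT orP (or_introl Ax)).
by exists x', y'; rewrite eA.
Qed.

Lemma pair_le_syml x y a b : pair_le x y a b = pair_le y x a b.
Proof. by rewrite /pair_le orbC. Qed.

Lemma transversal_sym t x y : Defs.transversal t x y = Defs.transversal t y x.
Proof.
rewrite /Defs.transversal eq_sym.
by case: (is_node t x); case: (is_node t y); case: (anc x y); case: (anc y x).
Qed.

Lemma pair_le_nodes t x y a b : pair_le x y a b -> is_node t a -> is_node t b ->
  is_node t x && is_node t y.
Proof.
move=> /orP[] /andP[h1 h2] na nb.
- by rewrite (node_prefix h1 na) (node_prefix h2 nb).
- by rewrite (node_prefix h1 na) (node_prefix h2 nb).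
Qed.

Lemma leaf_transversal t a b : is_leaf t a -> is_leaf t b -> a != b -> Defs.transversal t a b.
Proof.
move=> la lb ab; rewrite /Defs.transversal (leaf_node la) (leaf_node lb) ab /anc /=.
apply/andP; split; apply/negP => h.
- by move: ab; rewrite (leaf_no_desc la (leaf_node lb) h) eqxx.
- by move: ab; rewrite (leaf_no_desc lb (leaf_node la) h) eqxx.
Qed.

Lemma same_pair_mem a b u v : same_pair a b u v -> (a = u \/ a = v) /\ (b = u \/ b = v).
Proof. by case/orP=> /andP[/eqP-> /eqP->]; split; auto. Qed.

Lemma leaf_sanc t p q : is_leaf t p -> is_node t q -> prefix p q -> p != q -> False.
Proof. by move=> l n pr; rewrite (leaf_no_desc l n pr) eqxx. Qed.

Lemma cross_leaves t u v u' v' : cross u v u' v' ->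
  is_node t u -> is_node t v -> is_node t u' -> is_node t v' ->
  (is_leaf t u && is_leaf t v) || (is_leaf t u' && is_leaf t v') -> False.
Proof.
move=> [a [b [a' [b' [s1 [s2 [/andP[p1 n1] /andP[p2 n2]]]]]]]] nu nv nu' nv'.
have [[ea|ea] [eb|eb]] := same_pair_mem s1; have [[ea'|ea'] [eb'|eb']] := same_pair_mem s2;
subst => /orP[] /andP[l1 l2];
repeat match goal with
| H : is_true (is_leaf t ?p), P : is_true (prefix ?p ?q), N : is_true (?p != ?q) |- _ =>
    solve [ apply: (leaf_sanc H _ P N); assumption ]
end.
Qed.

Definition admits_on (V : finType) (E : rel V) (S : {set V}) t (A B : rel (seq bool)) :=
  exists f : V -> seq bool,
    [/\ {in S &, injective f}, (forall x, x \in S -> is_leaf t (f x)),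
        (forall p, is_leaf t p -> exists2 x, x \in S & f x = p) &
        (forall x y, x \in S -> y \in S -> x != y -> (E x y <-> model_adj A B (f x) (f y)))].

Definition goal_on (V : finType) (E : rel V) (d : nat) (S : {set V}) :=
  exists t (A B : rel (seq bool)),
    [/\ signed_tree_model t A B, clean t A B,
        degeneracy_le t (fun u v => A u v || B u v) d.+1 & admits_on E S t A B].

Lemma step (V : finType) (E : rel V) (d : nat) (S : {set V}) (u v : V) :
  symmetric E -> irreflexive E -> u \in S -> v \in S -> u != v -> sd E S u v <= d ->
  goal_on E d (S :\ v) -> goal_on E d S.
Proof.
move=> symE irrE uS vS uv sdle [t [A [B [[[SA TA] [SB TB] disj ncr] cl deg [f [finj fleaf fsurj fadj]]]]]].
have uS' : u \in S :\ v by rewrite in_setD1 uv uS.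
set pu := f u.
have pul : is_leaf t pu := fleaf u uS'.
set u' := rcons pu false.
set v' := rcons pu true.
have u'n : is_node t u' = false by exact: rcons_leaf_not_node.
have v'n : is_node t v' = false by exact: rcons_leaf_not_node.
have u'v' : (u' == v') = false by rewrite eqseq_rcons andbF.
have nA : forall x y, A x y -> is_node t x && is_node t y.
  by move=> x y /TA /and5P[-> -> _ _ _].
have nB : forall x y, B x y -> is_node t x && is_node t y.
  by move=> x y /TB /and5P[-> -> _ _ _].
set D := [set w in S | [&& w != u, w != v & E u w != E v w]].
have Dsub : forall w, w \in D -> [/\ w \in S :\ v, w != u & E u w != E v w].
  move=> w; rewrite inE => /and4P[wS wu wv ne]; split => //.
  by rewrite in_setD1 wv.
have Dcard : #|D| <= d.
  apply: leq_trans sdle; rewrite /sd; apply: subset_leq_card; apply/subsetP => w.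
  rewrite inE => /and4P[wS wu wv ne]; rewrite /nbhd !inE wS wu wv /=.
  by move: ne; case: (E u w); case: (E v w).
have fDleaf : forall w, w \in D -> is_leaf t (f w) /\ f w != pu.
  move=> w /Dsub[wS wu _]; split; first exact: fleaf.
  by apply/negP => /eqP /(finj _ _ wS uS') /eqP; rewrite (negbTE wu).
pose newp x y := (x == v') && ((y == u') || [exists w in D, f w == y]).
pose sgn y := if y == u' then E u v else [exists w in D, (f w == y) && E v w].
pose A' x y := [|| A x y, newp x y && ~~ sgn y | newp y x && ~~ sgn x].
pose B' x y := [|| B x y, newp x y && sgn y | newp y x && sgn x].
pose t' := graft t pu.
pose f' x := if x == v then v' else if x == u then u' else f x.
have nodeT' : forall q, is_node t' q = [|| is_node t q, q == u' | q == v'].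
  by move=> q; rewrite is_node_graft.
have leafT' : forall q, is_leaf t' q = [|| is_leaf t q && (q != pu), q == u' | q == v'].
  by move=> q; rewrite is_leaf_graft.
have newp_node : forall x y, is_node t x -> newp x y = false.
  by move=> x y nx; apply/negbTE; rewrite /newp; apply/negP => /andP[/eqP ex _]; move: nx; rewrite ex v'n.
have oldAB : forall x y, is_node t x -> is_node t y -> A' x y = A x y /\ B' x y = B x y.
  by move=> x y nx ny; rewrite /A' /B' !newp_node ?orbF.
have fDnode : forall w, w \in D -> is_node t (f w).
  by move=> w /fDleaf[/leaf_node].
have newp_inv : forall x y, newp x y ->
    x = v' /\ (y = u' \/ exists2 w, w \in D & f w = y).
  move=> x y /andP[/eqP -> /orP[/eqP ->|/exists_inP[w wD /eqP <-]]]; split => //; by [left | right; exists w].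
have sgnD : forall w, w \in D -> sgn (f w) = E v w.
  move=> w wD; rewrite /sgn; have := fDnode w wD; case: eqP => [->|_ _]; first by rewrite u'n.
  apply/exists_inP/idP => [[w2 w2D /andP[/eqP e h]]|h]; last by exists w; rewrite ?eqxx.
  have [w2S _ _] := Dsub w2 w2D; have [wS _ _] := Dsub w wD.
  by rewrite -(finj _ _ w2S wS e).
have sgnu' : sgn u' = E u v by rewrite /sgn eqxx.
have newp_leaf : forall x y, newp x y -> [/\ is_leaf t' x, is_leaf t' y & x != y].
  move=> x y /newp_inv[-> [->|[w wD <-]]].
  - by rewrite !leafT' !eqxx !orbT eq_sym u'v'.
  - have [fl fpu] := fDleaf w wD; rewrite !leafT' eqxx fl fpu !orbT; split => //.
    by apply/eqP => e; move: (fDnode w wD); rewrite -e v'n.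
have old_tr : forall x y, Defs.transversal t x y -> Defs.transversal t' x y.
  move=> x y /and5P[nx ny xy a1 a2]; by rewrite /Defs.transversal !nodeT' nx ny xy a1 a2.
have A'sym : forall x y, A' x y = A' y x.
  by move=> x y; rewrite /A' SA; case: (A y x); case: (newp x y && ~~ sgn y); case: (newp y x && ~~ sgn x).
have B'sym : forall x y, B' x y = B' y x.
  by move=> x y; rewrite /B' SB; case: (B y x); case: (newp x y && sgn y); case: (newp y x && sgn x).
have newp_tr : forall x y, newp x y -> Defs.transversal t' x y.
  by move=> x y /newp_leaf[lx ly xy]; apply: leaf_transversal.
have A'tr : forall x y, A' x y -> Defs.transversal t' x y.
  move=> x y /or3P[/TA/old_tr //|/andP[/newp_tr //]|/andP[/newp_tr]]; by rewrite transversal_sym.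
have B'tr : forall x y, B' x y -> Defs.transversal t' x y.
  move=> x y /or3P[/TB/old_tr //|/andP[/newp_tr //]|/andP[/newp_tr]]; by rewrite transversal_sym.
have newp_notnode : forall x y, newp x y -> is_node t x = false.
  by move=> x y /newp_inv[-> _].
have AB'inv : forall x y, A' x y || B' x y ->
    (A x y || B x y) \/ (newp x y \/ newp y x).
  move=> x y; rewrite /A' /B'; case: (A x y) => //=; first by left.
  case: (B x y) => /=; first by left.
  by case: (newp x y) => /=; [right; left | case: (newp y x) => /=; [right; right|]].
have STM : signed_tree_model t' A' B'.
  split; [by split | by split | | ].
  - move=> x y; apply/negP => /andP[].
    rewrite /A' /B'.
    case Ax: (A x y).
      move=> _; have /andP[nx ny] := nA _ _ Ax; rewrite (newp_node _ _ nx) (newp_node _ _ ny) /= orbF.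
      by move=> Bx; move: (disj x y); rewrite Ax Bx.
    case Bx: (B x y).
      have /andP[nx ny] := nB _ _ Bx; by rewrite (newp_node _ _ nx) (newp_node _ _ ny).
    rewrite /=.
    case nxy: (newp x y); case nyx: (newp y x) => //=.
    + move: nxy nyx => /newp_inv[-> [e|[w wD e]]] /newp_inv[e2 _]; [by move: u'v'; rewrite -e e2 eqxx | by move: (fDnode w wD); rewrite e e2 v'n].
    + by case: (sgn y).
    + by case: (sgn x).
  - move=> x y x2 y2 h1 h2 c.
    have /and5P[nx ny _ _ _] : Defs.transversal t' x y by case/orP: h1 => [/A'tr|/B'tr].
    have /and5P[nx2 ny2 _ _ _] : Defs.transversal t' x2 y2 by case/orP: h2 => [/A'tr|/B'tr].
    have lv : forall a b, newp a b \/ newp b a -> is_leaf t' a && is_leaf t' b.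
      by move=> a b [/newp_leaf[-> -> _]|/newp_leaf[-> -> _]].
    case: (AB'inv _ _ h1) => [o1|/lv l1].
    + case: (AB'inv _ _ h2) => [o2|/lv l2]; first exact: (ncr _ _ _ _ o1 o2 c).
      by apply: (cross_leaves c nx ny nx2 ny2); rewrite l2 orbT.
    + by apply: (cross_leaves c nx ny nx2 ny2); rewrite l1.
have nv'u' : newp v' u' by rewrite /newp !eqxx.
have CL : clean t' A' B'.
  move=> p; rewrite nodeT' => /or3P[/cl h | /eqP e | /eqP e].
  - by case/orP: h => h; rewrite /A' /B' /= h ?orbT.
  - move: e => /eqP; rewrite eqseq_rcons andbT => /eqP ->.
    by rewrite /A' /B' -/u' -/v' (SA u') (SB u') nv'u' sgnu'; case: (E u v); rewrite /= ?orbT.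
  - by move: e => /eqP; rewrite eqseq_rcons andbF.
have DG : degeneracy_le t' (fun x y => A' x y || B' x y) d.+1.
  move=> Sq uq alln ne.
  case v'S: (v' \in Sq).
  - exists v' => //.
    have sub : {subset filter (fun y => A' v' y || B' v' y) Sq <= u' :: map f (enum D)}.
      move=> y; rewrite mem_filter => /andP[h _]; case: (AB'inv _ _ h) => [o|[n|n]].
      + by case/orP: o => [/nA|/nB]; rewrite v'n.
      + move/newp_inv: n => [_ [->|[w wD <-]]]; first exact: mem_head.
        by rewrite inE; apply/orP; right; apply/mapP; exists w; rewrite ?mem_enum.
      + move/newp_inv: n => [e [e2|[w wD e2]]]; first by move: u'v'; rewrite -e2 eqxx.
        by move: (fDnode w wD); rewrite e2 v'n.
    rewrite -size_filter; apply: leq_trans (uniq_leq_size (filter_uniq _ uq) sub) _.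
    by rewrite /= size_map -cardE ltnS.
  case u'S: (u' \in Sq).
  - exists u' => //; rewrite (eq_in_count (a2 := pred0)) ?count_pred0 //.
    move=> y yS /=; apply/negbTE/negP => h; case: (AB'inv _ _ h) => [o|[n|n]].
    + by case/orP: o => [/nA|/nB]; rewrite u'n.
    + by move/newp_inv: n => [e _]; move: u'v'; rewrite e eqxx.
    + by move/newp_inv: n => [e _]; move: v'S; rewrite -e yS.
  have allt : all (is_node t) Sq.
    apply/allP => y yS; move/allP: alln => /(_ y yS); rewrite nodeT' => /or3P[//| /eqP e | /eqP e].
    + by move: u'S; rewrite -e yS.
    + by move: v'S; rewrite -e yS.
  have [x xS hx] := deg Sq uq allt ne; exists x => //.
  rewrite (eq_in_count (a2 := fun y => A x y || B x y)) //.
  by move=> y yS /=; have [-> ->] := oldAB x y (allP allt x xS) (allP allt y yS).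
have f'v : f' v = v' by rewrite /f' eqxx.
have f'u : f' u = u' by rewrite /f' (negbTE uv) eqxx.
have f'o : forall x, x != v -> x != u -> f' x = f x.
  by move=> x xv xu; rewrite /f' (negbTE xv) (negbTE xu).
have fpu : forall x, x \in S :\ v -> x != u -> f x != pu.
  by move=> x xS xu; apply/negP => /eqP /(finj _ _ xS uS') /eqP; rewrite (negbTE xu).
have oth : forall x, x \in S -> x != v -> x \in S :\ v.
  by move=> x xS xv; rewrite in_setD1 xv xS.
have cls : forall x, x \in S -> [\/ x = v, x = u |
    [/\ x != v, x != u, x \in S :\ v, f' x = f x & is_node t (f x)]].
  move=> x xS; case: (eqVneq x v) => [->|xv]; first by constructor 1.
  case: (eqVneq x u) => [->|xu]; first by constructor 2.
  constructor 3; split => //; [exact: oth | exact: f'o | exact/leaf_node/fleaf/oth].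
have T0 : forall a b, is_node t a -> is_node t b ->
    model_adj A B a b <-> model_adj A' B' a b.
  move=> a b na nb; split; apply: adj_transfer => x y le _;
    have /andP[nx ny] := pair_le_nodes le na nb; have [eA eB] := oldAB x y nx ny; by split.
have zpre : forall z y b, z = rcons pu b -> is_node t y -> prefix y z -> prefix y pu.
  move=> z y b -> ny; rewrite prefix_rconsR => /orP[/eqP e|//].
  by move: ny; rewrite e rcons_leaf_not_node.
have T : forall z w, (z = u' \/ (z = v' /\ w \notin D)) -> w \in S :\ v -> w != u ->
    model_adj A B pu (f w) <-> model_adj A' B' z (f w).
  move=> z w hz wS wu; have nw := leaf_node (fleaf w wS).
  have [b zb] : exists b, z = rcons pu b by case: hz => [->|[-> _]]; eexists.
  have pz : prefix pu z by rewrite zb prefix_rcons.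
  have bad : forall a c, newp a c -> pair_le a c z (f w) -> False.
    move=> a c /newp_inv[-> hc] /orP[] /andP[h1 h2].
    - case: hz => [ez|[ez wD]].
      + by move: h1; rewrite /anc ez prefix_rconsR eq_sym u'v' rcons_not_prefix.
      + case: hc => [ec|[w2 w2D ec]]; first by move: (node_prefix h2 nw); rewrite ec u'n.
        have [lw2 _] := fDleaf w2 w2D; have [w2S _ _] := Dsub w2 w2D.
        have e : f w2 = f w by apply: (leaf_no_desc lw2 nw); rewrite ec; exact: h2.
        by move: wD; rewrite -(finj _ _ w2S wS e) w2D.
    - by move: (node_prefix h2 nw); rewrite v'n.
  have Hon : forall x y, pair_le x y pu (f w) -> A x y || B x y ->
      [/\ pair_le x y z (f w), A' x y = A x y & B' x y = B x y].
    move=> x y le o; have /andP[nx ny] := pair_le_nodes le (leaf_node pul) nw.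
    have [eA eB] := oldAB x y nx ny; split => //.
    by move: le; rewrite /pair_le /anc => /orP[] /andP[h1 h2]; apply/orP; [left|right]; rewrite h2 (prefix_trans h1 pz).
  have Hno : forall x y, pair_le x y z (f w) -> A' x y || B' x y ->
      [/\ pair_le x y pu (f w), A x y = A' x y & B x y = B' x y].
    move=> x y le o.
    have /andP[nx ny] : is_node t x && is_node t y.
      case: (AB'inv _ _ o) => [/orP[/nA|/nB] //|[n|n]]; first by case: (bad _ _ n le).
      by rewrite pair_le_syml in le; case: (bad _ _ n le).
    have [eA eB] := oldAB x y nx ny; split => //.
    by move: le; rewrite /pair_le /anc => /orP[] /andP[h1 h2]; apply/orP; [left|right]; rewrite h2 (zpre _ _ _ zb _ h1).
  by split; apply: adj_transfer; first [exact: Hon | exact: Hno].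
have nodeo : forall x, is_node t x -> x != u' /\ x != v'.
  by move=> x nx; split; apply/eqP => e; move: nx; rewrite e ?u'n ?v'n.
have Psym : forall x y, (E x y <-> model_adj A' B' (f' x) (f' y)) ->
    (E y x <-> model_adj A' B' (f' y) (f' x)).
  move=> x y [h1 h2]; rewrite symE; split => [/h1 /model_adj_sym //|/model_adj_sym /h2 //].
have Po : forall x y, x \in S -> y \in S -> x != y -> x != v -> x != u -> y != v -> y != u ->
    (E x y <-> model_adj A' B' (f' x) (f' y)).
  move=> x y xS yS xy xv xu yv yu; rewrite !f'o //.
  have xS' := oth x xS xv; have yS' := oth y yS yv.
  apply: iff_trans (fadj x y xS' yS' xy) _; apply: T0; exact/leaf_node/fleaf.
have Pu : forall y, y \in S -> y != v -> y != u ->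
    (E u y <-> model_adj A' B' (f' u) (f' y)).
  move=> y yS yv yu; have yS' := oth y yS yv; rewrite f'u f'o //.
  have uy : u != y by rewrite eq_sym.
  apply: iff_trans (fadj u y uS' yS' uy) _.
  by apply: T => //; left.
have Bv'u' : B v' u' = false by apply/negP => /nB; rewrite v'n.
have Bv'f : forall x, B v' x = false by move=> x; apply/negP => /nB; rewrite v'n.
have Pv : forall y, y \in S -> y != v -> (E v y <-> model_adj A' B' (f' v) (f' y)).
  move=> y yS yv; rewrite f'v; case: (eqVneq y u) => [->|yu].
  - rewrite f'u.
    have hp : A' v' u' || B' v' u' by rewrite /A' /B' nv'u'; case: (sgn u'); rewrite ?orbT.
    have eB : B' v' u' = E v u.
      by rewrite /B' Bv'u' nv'u' sgnu' (symE v u) /= /newp u'v' /= orbF.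
    rewrite -eB; exact: (iff_sym (present_adj A'sym B'sym hp)).
  - have yS' := oth y yS yv; rewrite f'o //.
    case yD: (y \in D).
    + have nvf : newp v' (f y) by rewrite /newp eqxx; apply/orP; right; apply/exists_inP; exists y.
      have fnv : newp (f y) v' = false.
        by apply: newp_node; apply/leaf_node/fleaf.
      have hp : A' v' (f y) || B' v' (f y).
        by rewrite /A' /B' nvf; case: (sgn (f y)); rewrite ?orbT.
      have eB : B' v' (f y) = E v y by rewrite /B' Bv'f nvf fnv sgnD //= orbF.
      rewrite -eB; exact: (iff_sym (present_adj A'sym B'sym hp)).
    + have e : E v y = E u y.
        move: yD; rewrite inE yS yu yv /=; by case: (E u y); case: (E v y).
      have uy : u != y by rewrite eq_sym.
      rewrite e; apply: iff_trans (fadj u y uS' yS' uy) _.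
      by apply: T => //; right; rewrite yD.
exists t', A', B'; split => //; exists f'; split.
- move=> x y xS yS; case: (cls x xS) => [->|->|[xv xu xS' -> nx]];
    case: (cls y yS) => [->|->|[yv yu yS' -> ny]]; rewrite ?f'v ?f'u //.
  all: try (by move=> e; move: u'v'; rewrite e eqxx).
  all: try (by move=> e; move: u'v'; rewrite -e eqxx).
  all: try (by move=> e; move: ny; rewrite -e ?u'n ?v'n).
  all: try (by move=> e; move: nx; rewrite e ?u'n ?v'n).
  exact: finj.
- move=> x xS; case: (cls x xS) => [->|->|[xv xu xS' -> nx]].
  + by rewrite f'v leafT' eqxx !orbT.
  + by rewrite f'u leafT' eqxx !orbT.
  + by rewrite leafT' fleaf // fpu.
- move=> p; rewrite leafT' => /or3P[/andP[lp ppu]|/eqP ->|/eqP ->].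
  + have [x xS' fx] := fsurj p lp; move: (xS'); rewrite in_setD1 => /andP[xv xS].
    have xu : x != u by apply/eqP => e; move: ppu; rewrite -fx e eqxx.
    by exists x => //; rewrite f'o.
  + by exists u.
  + by exists v.
- move=> x y xS yS xy.
  case: (eqVneq x v) => [exv|xv].
    by subst x; have yv : y != v by [rewrite eq_sym]; exact: Pv y yS yv.
  case: (eqVneq y v) => [eyv|yv]; first by subst y; exact/Psym/Pv.
  case: (eqVneq x u) => [exu|xu].
    by subst x; have yu : y != u by [rewrite eq_sym]; exact: Pu y yS yv yu.
  case: (eqVneq y u) => [eyu|yu]; first by subst y; exact/Psym/Pu.
  exact: Po.
Qed.

Lemma goal_all (V : finType) (E : rel V) (d : nat) (S : {set V}) :
  symmetric E -> irreflexive E -> sdd_le E d S -> goal_on E d S.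
Proof.
move=> symE irrE; elim => {S} [S /eqP /cards1P [x0 ->] | S u v uS vS uv sdle _ IH].
- exists BLeaf, (fun _ _ => false), (fun _ _ => false); split.
  + split; [by split | by split | by [] | by []].
  + by case.
  + move=> [|a s] // _ _ _; exists a; first exact: mem_head.
    by rewrite (@eq_count _ _ pred0) // count_pred0.
  + exists (fun _ => [::]); split.
    * by move=> x y; rewrite !inE => /eqP -> /eqP ->.
    * by [].
    * by move=> [|b p] // _; exists x0; rewrite ?inE.
    * by move=> x y; rewrite !inE => /eqP -> /eqP ->; rewrite eqxx.
- exact: (step symE irrE uS vS uv sdle IH).
Qed.

Unset Implicit Arguments.
Theorem lemma3p1 (V : finType) (E : rel V) (d : nat) :
  symmetric E -> irreflexive E -> 0 < #|V| ->
  sdd_le E d [set: V] ->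
  exists (t : btree) (A B : rel (seq bool)),
    [/\ signed_tree_model t A B, clean t A B,
        degeneracy_le t (fun u v => A u v || B u v) d.+1 &
        admits E t A B].
Proof.
move=> symE irrE _ H.
have [t [A [B [stm cl dg [f [finj fl fs fa]]]]]] := goal_all symE irrE H.
exists t, A, B; split => //; exists f; split.
- by move=> x y; apply: finj; rewrite inE.
- by move=> x; apply: fl; rewrite inE.
- by move=> p /fs [x _ e]; exists x.
- by move=> x y; apply: fa; rewrite inE.
Qed.
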